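(* Let $M$ be a finite-dimensional left $\mathsf{VBr}_{r,t}(\omega)$-module with decomposition $M=\bigoplus_{\mathbf a,\mathbf i}1_{\mathbf a}M_{\mathbf i}$. Let $\mathbf a\in\mathrm{Seq}_{r,t}$, $k\in\{1,\dots,r+t-1\}$ with $\mathsf s_k\mathbf a\neq\mathbf a$, and $\mathbf i\in\mathbb C^{r+t}$; let $I=\{\mathbf i'\in\mathbb C^{r+t}:\mathrm i'_j=\mathrm i_j\text{ for }j\ne k,k+1,\ \mathrm i'_k+\mathrm i'_{k+1}=0\}$. Then $\hat s_k1_{\mathbf a}M_{\mathbf i}\subseteq1_{\mathsf s_k\mathbf a}M_{\mathsf s_k\mathbf i}$ if $\mathrm i_k+\mathrm i_{k+1}\neq0$, and $\hat s_k1_{\mathbf a}M_{\mathbf i}\subseteq\bigoplus_{\mathbf i'\in I}1_{\mathsf s_k\mathbf a}M_{\mathbf i'}$ if $\mathrm i_k+\mathrm i_{k+1}=0$.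
   Context: $\mathrm{Seq}_{r,t}$: sequences $\mathbf a\in\{\wedge,\vee\}^{r+t}$ with exactly $r$ entries $\wedge$; $J=\{1,\dots,r+t-1\}$; $\mathsf s_k$ swaps entries $k,k+1$ (of sequences and of vectors in $\mathbb C^{r+t}$). $\mathrm{Br}_{r,t}(\gamma)$: basis oriented Brauer diagrams $\mathbf a\to\mathbf b$ (perfect matchings between bottom row labelled $\mathbf a$ and top row labelled $\mathbf b$; bottom-to-top strands join equal labels, strands within a row join different labels), product by stacking (second factor below), $0$ if labels mismatch, loops replaced by $\gamma$. $1_{\mathbf a}$ identity; for $k\in J$: if $a_k=a_{k+1}$, $s_k1_{\mathbf a}$ crosses strands $k,k+1$ ($\mathbf a\to\mathbf a$); if $a_k\neq a_{k+1}$, $\hat s_k1_{\mathbf a}$ crossing $\mathbf a\to\mathsf s_k\mathbf a$, $e_k1_{\mathbf a}$ cap at bottom $k,k+1$ and cup at top $k,k+1$ ($\mathbf a\to\mathbf a$), $\hat e_k1_{\mathbf a}$ same shape $\mathbf a\to\mathsf s_k\mathbf a$; these are $0$ when the condition fails; $s_k=\sum_{\mathbf a}s_k1_{\mathbf a}$ etc. For $\omega=(\omega_j)_{j\ge0}\subset\mathbb C$, $\mathsf{VBr}_{r,t}(\omega)$ is the quotient of the free product $\mathrm{Br}_{r,t}(\omega_0)*\mathbb C[y_1,\dots,y_{r+t}]$ by: $y_i$ commutes with all $1_{\mathbf a}$, and with $s_k,\hat s_k,e_k,\hat e_k$ when $i\notin\{k,k+1\}$; $e_1y_1^je_11_{\mathbf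 a}=\omega_je_11_{\mathbf a}$ for $j\ge0$ and $(a_1,a_2)=(\wedge,\vee)$; for $a_k=a_{k+1}$: $s_ky_k1_{\mathbf a}-y_{k+1}s_k1_{\mathbf a}=-1_{\mathbf a}$, $s_ky_{k+1}1_{\mathbf a}-y_ks_k1_{\mathbf a}=1_{\mathbf a}$; $\hat s_ky_k-y_{k+1}\hat s_k=\hat e_k$, $\hat s_ky_{k+1}-y_k\hat s_k=-\hat e_k$; $e_k,\hat e_k$ are annihilated on both sides by $y_k+y_{k+1}$. $1_{\mathbf a}M_{\mathbf i}=\{v\in1_{\mathbf a}M:(y_k-\mathrm i_k)^Nv=0\ \forall k,\ N\gg0\}$. *)

(* Defs.v *)
From HB Require Import structures.
From mathcomp Require Import all_boot all_order all_algebra.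
From mathcomp Require Import reals.
From mathcomp Require Export complex.
Set Implicit Arguments.
Unset Strict Implicit.
Unset Printing Implicit Defensive.
Import Order.TTheory GRing.Theory Num.Theory.
Local Open Scope ring_scope.

(* Positions are 0-based: position j : 'I_n stands for the paper's j+1.
   The paper's k in {1,...,r+t-1} is our k with k.+1 < r+t, and the paper's
   entries k, k+1 are our positions k, k.+1. *)

Definition swp (n k : nat) (j : 'I_n) : 'I_n :=
  if val j == k then insubd j k.+1
  else if val j == k.+1 then insubd j k else j.

(* Sequences in {wedge,vee}^n: true = wedge, false = vee. *)
Definition bsq (n : nat) := {ffun 'I_n -> bool}.
Arguments bsq n%_N.

Definition Seqrt (r t : nat) : pred (bsq (r + t)) :=
  fun a => #|[pred j | a j]| == r.

Arguments Seqrt : clear implicits.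
Arguments Seqrt r%_N t%_N.
Definition swseq (n k : nat) (a : bsq n) : bsq n := [ffun j => a (swp k j)].
Definition swvec (T : Type) (n k : nat) (i : 'I_n -> T) : 'I_n -> T :=
  fun j => i (swp k j).

(* A finite-dimensional left VBr_{r,t}(omega)-module, presented concretely:
   M = K^N (column vectors), each generator acts by an N x N matrix, the
   algebra product being matrix product.  one a = action of 1_a,
   S k, Sh k, E k, Eh k = actions of s_k, \hat s_k, e_k, \hat e_k
   (the sums over all a), Y j = action of y_(j+1). *)
Record is_VBr_module (K : fieldType) (r t : nat) (omega : nat -> K) (N : nat)
    (one : bsq (r + t) -> 'M[K]_N)
    (S Sh E Eh : nat -> 'M[K]_N) (Y : 'I_(r + t) -> 'M[K]_N) : Prop := {
  one_out : forall a, a \notin Seqrt r t -> one a = 0;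
  one_mul : forall a b, one a * one b = if a == b then one a else 0;
  one_sum : \sum_(a in Seqrt r t) one a = 1;
  (* generators are only defined for 1 <= k <= r+t-1 *)
  gen_out : forall k, ~~ (k.+1 < r + t)%N -> [/\ S k = 0, Sh k = 0, E k = 0 & Eh k = 0];
  S_shape : forall k a, S k * one a = one a * S k * one a;
  E_shape : forall k a, E k * one a = one a * E k * one a;
  Sh_shape : forall k a, Sh k * one a = one (swseq k a) * Sh k * one a;
  Eh_shape : forall k a, Eh k * one a = one (swseq k a) * Eh k * one a;
  S_zero : forall k (a : bsq (r + t)) (hk : (k.+1 < r + t)%N),
      a (Ordinal (ltnW hk)) != a (Ordinal hk) -> S k * one a = 0;
  Sh_zero : forall k (a : bsq (r + t)) (hk : (k.+1 < r + t)%N),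
      a (Ordinal (ltnW hk)) == a (Ordinal hk) -> Sh k * one a = 0;
  E_zero : forall k (a : bsq (r + t)) (hk : (k.+1 < r + t)%N),
      a (Ordinal (ltnW hk)) == a (Ordinal hk) -> E k * one a = 0;
  Eh_zero : forall k (a : bsq (r + t)) (hk : (k.+1 < r + t)%N),
      a (Ordinal (ltnW hk)) == a (Ordinal hk) -> Eh k * one a = 0;
  S_one : forall k a, S k * one a = one a * S k;
  E_one : forall k a, E k * one a = one a * E k;
  Y_comm : forall i j, Y i * Y j = Y j * Y i;
  Y_one : forall i a, Y i * one a = one a * Y i;
  Y_gen : forall i k, val i != k -> val i != k.+1 ->
      [/\ Y i * S k = S k * Y i, Y i * Sh k = Sh k * Y i,
          Y i * E k = E k * Y i & Y i * Eh k = Eh k * Y i];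
  E1_omega : forall (h : (1 < r + t)%N) (a : bsq (r + t)) (j : nat),
      a (Ordinal (ltnW h)) -> ~~ a (Ordinal h) ->
      E 0 * Y (Ordinal (ltnW h)) ^+ j * E 0 * one a = omega j *: (E 0 * one a);
  S_Y : forall k (hk : (k.+1 < r + t)%N) (a : bsq (r + t)),
      a (Ordinal (ltnW hk)) == a (Ordinal hk) ->
      S k * Y (Ordinal (ltnW hk)) * one a - Y (Ordinal hk) * S k * one a = - one a
      /\ S k * Y (Ordinal hk) * one a - Y (Ordinal (ltnW hk)) * S k * one a = one a;
  Sh_Y : forall k (hk : (k.+1 < r + t)%N),
      Sh k * Y (Ordinal (ltnW hk)) - Y (Ordinal hk) * Sh k = Eh k
      /\ Sh k * Y (Ordinal hk) - Y (Ordinal (ltnW hk)) * Sh k = - Eh k;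
  E_Y : forall k (hk : (k.+1 < r + t)%N),
      let z := Y (Ordinal (ltnW hk)) + Y (Ordinal hk) in
      [/\ z * E k = 0, E k * z = 0, z * Eh k = 0 & Eh k * z = 0]
}.

(* 1_a M_i : v with 1_a v = v and (y_j - i_j)^m v = 0 for all j, some m. *)
Definition in_wt (K : fieldType) (n N : nat) (one : bsq n -> 'M[K]_N)
    (Y : 'I_n -> 'M[K]_N) (a : bsq n) (i : 'I_n -> K) (v : 'cV[K]_N) : Prop :=
  one a *m v = v /\
  forall j : 'I_n, exists m : nat, (Y j - (i j)%:M) ^+ m *m v = 0.

Definition in_sum_wt (K : fieldType) (n N : nat) (one : bsq n -> 'M[K]_N)
    (Y : 'I_n -> 'M[K]_N) (a : bsq n) (I : ('I_n -> K) -> Prop) (v : 'cV[K]_N) : Prop :=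
  exists s : seq ('cV[K]_N), v = \sum_(u <- s) u /\
    forall u, u \in s -> exists i', I i' /\ in_wt one Y a i' u.

(* Main.v *)
Require Import Defs.
From HB Require Import structures.
From mathcomp Require Import all_boot all_order all_algebra.
From mathcomp Require Import reals complex.
Import Order.TTheory GRing.Theory Num.Theory.
Local Open Scope ring_scope.

Set Implicit Arguments.
Unset Strict Implicit.
Section H.
Variables (K : fieldType) (N : nat).
Implicit Types (X P Q U V : 'M[K]_N) (u v : 'cV[K]_N).

Lemma mmA X P v : X *m (P *m v) = (X * P) *m v.
Proof. by rewrite mulmxA. Qed.

Lemma comm_sc X (c : K) : GRing.comm X c%:M.
Proof. by rewrite /GRing.comm -!mulmxE scalar_mxC. Qed.

Lemma comm_sub X P (a b : K) m p : GRing.comm X P ->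
  GRing.comm ((X - a%:M) ^+ m) ((P - b%:M) ^+ p).
Proof.
move=> H; apply: commrX; apply/commr_sym; apply: commrX.
apply/commr_sym; apply: commrB; last exact: comm_sc.
apply/commr_sym; apply: commrB; [exact/commr_sym | exact: comm_sc].
Qed.

Lemma comm_vec X P v : GRing.comm X P -> X *m (P *m v) = P *m (X *m v).
Proof. by move=> H; rewrite !mmA H. Qed.

Lemma add_nil U V : GRing.comm U V -> forall n a b v, (a + b = n)%N ->
  U ^+ a *m v = 0 -> V ^+ b *m v = 0 -> (U + V) ^+ n *m v = 0.
Proof.
move=> HUV n; elim: n => [|n IH] a b v.
  move/eqP; rewrite addn_eq0 => /andP [/eqP -> _]; rewrite !expr0 mul1mx => -> _; by rewrite ?mulmx0 ?mul1mx.
case: a => [|a].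
  rewrite expr0 mul1mx => _ ->; by rewrite !mulmx0.
move=> Hab Ha Hb.
rewrite exprSr -mmA mulmxDl mulmxDr.
rewrite (IH a b (U *m v)); first last.
- by rewrite comm_vec ?Hb ?mulmx0 //; apply/commr_sym/commrX/commr_sym.
- by rewrite mmA -exprSr.
- by move: Hab; rewrite addSn => [[]].
rewrite add0r; case: b Hab Hb => [|b] Hab Hb.
  by move: Hb; rewrite expr0 mul1mx => ->; rewrite !mulmx0.
apply: (IH a.+1 b); first by move: Hab; rewrite addnS => [[]].
- by rewrite comm_vec ?Ha ?mulmx0 //; apply/commr_sym/commrX/commr_sym.
- by rewrite mmA -exprSr.
Qed.

Lemma transport X P Q (c : K) (W : 'cV[K]_N -> Prop) :
  (forall u, W u -> W ((P - c%:M) *m u)) ->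
  (forall u, W u -> X *m (P *m u) = Q *m (X *m u)) ->
  forall m u, W u -> (Q - c%:M) ^+ m *m (X *m u) = X *m ((P - c%:M) ^+ m *m u).
Proof.
move=> HW HX; elim=> [|m IH] u Wu; first by rewrite !expr0 !mul1mx.
rewrite !exprSr -!mmA -IH; last exact: HW.
congr (_ *m _).
by rewrite !mulmxBl !mul_scalar_mx mulmxBr HX // -scalemxAr.
Qed.


Lemma comm_subl X Z (a : K) : GRing.comm X Z -> GRing.comm (X - a%:M) Z.
Proof.
move=> H; apply/commr_sym; apply: commrB; [exact/commr_sym | exact: comm_sc].
Qed.

Lemma comm_powl X Z (a : K) m : GRing.comm X Z -> GRing.comm ((X - a%:M) ^+ m) Z.
Proof. by move=> H; apply/commr_sym/commrX/commr_sym/comm_subl. Qed.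

End H.

Lemma hmxM (F : comNzRingType) n (A : 'M[F]_n.+1) p q m (w : 'M_(n.+1, m)) :
  horner_mx A (p * q) *m w = horner_mx A p *m (horner_mx A q *m w).
Proof. by rewrite rmorphM mulmxA mulmxE. Qed.

Lemma decomp_aux (F : closedFieldType) n (A : 'M[F]_n.+1) :
  forall (s : seq F) (w : 'cV_n.+1), horner_mx A (\prod_(z <- s) ('X - z%:P)) *m w = 0 ->
  exists l : seq (F * {poly F}), w = \sum_(x <- l) horner_mx A x.2 *m w /\
     forall x, x \in l -> exists m, (A - x.1%:M) ^+ m *m (horner_mx A x.2 *m w) = 0.
Proof.
move=> s; move: {2}(size s) (leqnn (size s)) => b; elim: b s => [|b IH] s.
  rewrite leqn0 => /nilP -> w; rewrite big_nil rmorph1 mul1mx => ->.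
  by exists [::]; rewrite big_nil.
case: s => [|l s] Hs w.
  rewrite big_nil rmorph1 mul1mx => ->.
  by exists [::]; rewrite big_nil.
set s0 := l :: s.
set P := ('X - l%:P) ^+ (count (pred1 l) s0).
set q := \prod_(z <- s0 | z != l) ('X - z%:P).
have HPq : \prod_(z <- s0) ('X - z%:P) = P * q.
  rewrite (bigID (pred1 l)) /=; congr (_ * _).
  rewrite (eq_bigr (fun _ => 'X - l%:P)); last by move=> z /eqP ->.
  by rewrite big_const_seq /P; elim: (count _ _) => //= m ->; rewrite exprS.
have Hcop : coprimep P q.
  apply: coprimep_expl; rewrite coprimep_sym coprimep_XsubC.
  by rewrite /q -big_filter root_prod_XsubC mem_filter eqxx.
case/Bezout_eq1_coprimepP: Hcop => [[u1 u2] /= Hu].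
rewrite HPq => Hw.
have Hw1 : horner_mx A (\prod_(z <- [seq z <- s0 | z != l]) ('X - z%:P)) *m
             (horner_mx A (u1 * P) *m w) = 0.
  rewrite big_filter -/q -hmxM (_ : q * (u1 * P) = u1 * (P * q)).
    by rewrite hmxM Hw mulmx0.
  by rewrite mulrCA [q * P]mulrC.
have Hsz : (size [seq z <- s0 | z != l] <= b)%N.
  by rewrite size_filter /= eqxx add0n (leq_trans (count_size _ _)).
have [l1 [Hl1 Hl1']] := IH _ Hsz _ Hw1.
exists ((l, u2 * q) :: [seq (x.1, x.2 * (u1 * P)) | x <- l1]).
split.
  rewrite big_cons big_map /=.
  have -> : \sum_(x <- l1) horner_mx A (x.2 * (u1 * P)) *m w
          = horner_mx A (u1 * P) *m w.
    rewrite [RHS]Hl1; apply: eq_bigr => x _; by rewrite hmxM.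
  by rewrite -mulmxDl -rmorphD addrC Hu rmorph1 mul1mx.
move=> x; rewrite inE => /orP [/eqP -> | ] /=.
  exists (count (pred1 l) s0).
  have -> : (A - l%:M) ^+ count (pred1 l) s0 = horner_mx A P.
    by rewrite /P rmorphXn rmorphB /= horner_mx_X horner_mx_C.
  rewrite -hmxM (_ : P * (u2 * q) = u2 * (P * q)).
    by rewrite hmxM Hw mulmx0.
  by rewrite mulrCA.
case/mapP => y Hy -> /=.
have [m Hm] := Hl1' y Hy; exists m.
by rewrite hmxM Hm.
Qed.

Lemma decomp (F : closedFieldType) N (A : 'M[F]_N) (w : 'cV_N) :
  exists l : seq (F * 'cV_N), w = \sum_(x <- l) x.2 /\
   forall x, x \in l -> (exists m, (A - x.1%:M)^+m *m x.2 = 0) /\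
     forall B : 'M_N, B * A = A * B -> B *m w = 0 -> B *m x.2 = 0.
Proof.
case: N A w => [|n] A w.
  by exists [::]; rewrite big_nil flatmx0.
have [s Hs] := closed_field_poly_normal (char_poly A).
move: Hs; rewrite (monicP (char_poly_monic A)) scale1r => Hs.
have Hw : horner_mx A (\prod_(z <- s) ('X - z%:P)) *m w = 0.
  by rewrite -Hs Cayley_Hamilton mul0mx.
have [l [Hl Hl']] := @decomp_aux _ _ A s w Hw.

exists [seq (x.1, horner_mx A x.2 *m w) | x <- l]; split.
  by rewrite big_map.
move=> x /mapP [y Hy ->] /=; split; first exact: Hl'.
move=> B HB HBw; rewrite mulmxA.
have HC : comm_mx A B by rewrite /comm_mx !mulmxE HB.
by rewrite -(comm_horner_mx y.2 HC) -mulmxA HBw mulmx0.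
Qed.

Theorem lemma3p3 (R : realType) (r t : nat) (omega : nat -> R[i]) (N : nat)
    (one : bsq (r + t) -> 'M[R[i]]_N) (S Sh E Eh : nat -> 'M[R[i]]_N)
    (Y : 'I_(r + t) -> 'M[R[i]]_N)
    (HM : is_VBr_module omega one S Sh E Eh Y)
    (a : bsq (r + t)) (Ha : a \in Seqrt r t)
    (k : nat) (hk : (k.+1 < r + t)%N) (Hsa : swseq k a != a)
    (i : 'I_(r + t) -> R[i]) (v : 'cV[R[i]]_N) (Hv : in_wt one Y a i v) :
  let ik := i (Ordinal (ltnW hk)) in
  let ik1 := i (Ordinal hk) in
  (ik + ik1 != 0 -> in_wt one Y (swseq k a) (swvec k i) (Sh k *m v)) /\
  (ik + ik1 = 0 ->
     in_sum_wt one Y (swseq k a)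
       (fun i' => (forall j : 'I_(r + t), val j != k -> val j != k.+1 -> i' j = i j)
                  /\ i' (Ordinal (ltnW hk)) + i' (Ordinal hk) = 0)
       (Sh k *m v)).
Proof.
move=> ik ik1.
have [Hva Hvw] := Hv.
pose o := Ordinal (ltnW hk); pose o1 := Ordinal hk.
pose y := Y o; pose y' := Y o1.
pose a' := swseq k a.
have oo1 : (o1 == o) = false by rewrite -val_eqE /= gtn_eqF.
have swo : swp k o = o1.
  by rewrite /swp /= eqxx; apply: val_inj; rewrite /= val_insubd hk.
have swo1 : swp k o1 = o.
  rewrite /swp /= gtn_eqF // eqxx; apply: val_inj; by rewrite /= val_insubd (ltnW hk).
have swj : forall j : 'I_(r + t), val j != k -> val j != k.+1 -> swp k j = j.
  by move=> j H1 H2; rewrite /swp (negbTE H1) (negbTE H2).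
have ShA : one a' *m (Sh k *m v) = Sh k *m v.
  have E1 : Sh k *m v = (one a' * Sh k * one a) *m v.
    by rewrite -(Sh_shape HM) -mmA Hva.
  by rewrite E1 mmA !mulrA (one_mul HM) eqxx.
have [H1 H2] : Sh k * y - y' * Sh k = Eh k /\ Sh k * y' - y * Sh k = - Eh k
  := Sh_Y HM hk.
pose z := y + y'.
have Hcyy : GRing.comm y y' := Y_comm HM o o1.
have Hyz : GRing.comm y z by apply: commrD; [exact: erefl | exact: Hcyy].
have Hy'z : GRing.comm y' z by apply: commrD; [exact/commr_sym | exact: erefl].
have HShz : GRing.comm (Sh k) z.
  apply/eqP; rewrite -subr_eq0 /z mulrDl mulrDr.
  have <- : Sh k * y - y' * Sh k + (Sh k * y' - y * Sh k) = 0 by rewrite H1 H2 subrr.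
  by rewrite addrACA -opprD [y' * _ + _]addrC.
have [m1 Hm1] := Hvw o.
have [m2 Hm2] := Hvw o1.
have Hz : (z - (ik + ik1)%:M) ^+ (m1 + m2) *m v = 0.
  have -> : z - (ik + ik1)%:M = (y - ik%:M) + (y' - ik1%:M).
    by rewrite raddfD /= opprD addrACA.
  apply: (add_nil _ (erefl (m1 + m2)%N) Hm1 Hm2).
  by have := comm_sub ik ik1 1 1 Hcyy; rewrite !expr1.
have HYj : forall j : 'I_(r + t), val j != k -> val j != k.+1 ->
    forall c m, GRing.comm ((Y j - c%:M) ^+ m) (Sh k).
  move=> j Hj1 Hj2 c m; apply: comm_powl.
  by have [_ H _ _] := Y_gen HM Hj1 Hj2.
split.
- move=> Hc.
  pose c := ik + ik1.
  pose W := fun u : 'cV[R[i]]_N => exists n, (z - c%:M) ^+ n *m u = 0.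
  have HE : forall n, Eh k * (z - c%:M) ^+ n = (- c) ^+ n *: Eh k.
    have [_ _ _ Ez] := E_Y HM hk.
    elim=> [|n IH]; first by rewrite !expr0 mulr1 scale1r.
    rewrite exprSr mulrA IH -mulmxE -scalemxAl mulmxE mulrBr Ez.
    rewrite -mulmxE mul_mx_scalar sub0r -scaleNr scalerA -exprSr.
    by [].
  have EhW : forall u, W u -> Eh k *m u = 0.
    move=> u [n Hn].
    have : (- c) ^+ n *: (Eh k *m u) = 0 by rewrite scalemxAl -HE -mmA Hn mulmx0.
    move/eqP; rewrite scalemx_eq0 expf_eq0 oppr_eq0 (negbTE Hc) andbF /=.
    by move/eqP.
  have WP : forall B, GRing.comm B z -> forall u, W u -> W (B *m u).
    move=> B HB u [n Hn]; exists n.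
    rewrite comm_vec ?Hn ?mulmx0 //.
    by apply/commr_sym/commrX/commrB; [exact/commr_sym | exact: comm_sc].
  have Wv : W v by exists (m1 + m2)%N.
  have T1 : forall m u, W u -> (y' - ik%:M) ^+ m *m (Sh k *m u)
                              = Sh k *m ((y - ik%:M) ^+ m *m u).
    apply: transport; first by move=> u; apply: WP; apply: comm_subl.
    move=> u Wu; apply/eqP; rewrite -subr_eq0 !mmA -mulmxBl H1 EhW //.
  have T2 : forall m u, W u -> (y - ik1%:M) ^+ m *m (Sh k *m u)
                              = Sh k *m ((y' - ik1%:M) ^+ m *m u).
    apply: transport; first by move=> u; apply: WP; apply: comm_subl.
    move=> u Wu; apply/eqP; rewrite -subr_eq0 !mmA -mulmxBl H2 mulNmx EhW //.
    by rewrite oppr0.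
  split; first exact: ShA.
  move=> j; rewrite /swvec.
  have [Hj1|Hj1] := eqVneq (val j) k.
    have -> : j = o by apply: val_inj.
    by rewrite swo; exists m2; rewrite T2 // Hm2 mulmx0.
  have [Hj2|Hj2] := eqVneq (val j) k.+1.
    have -> : j = o1 by apply: val_inj.
    by rewrite swo1; exists m1; rewrite T1 // Hm1 mulmx0.
  rewrite swj //; have [m Hm] := Hvw j; exists m.
  by rewrite comm_vec ?Hm ?mulmx0 //; apply: HYj.
- move=> Hc.
  move: Hz; rewrite /ik /ik1 -/o -/o1 Hc raddf0 subr0 => Hz.
  have Hzw : z ^+ (m1 + m2) *m (Sh k *m v) = 0.
    rewrite comm_vec ?Hz ?mulmx0 //.
    by apply/commr_sym/commrX.
  have [l [Hl Hl']] := decomp y (Sh k *m v).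
  exists [seq x.2 | x <- l]; split; first by rewrite big_map.
  move=> u /mapP [x Hx ->].
  have [[m Hm] HB] := Hl' x Hx.
  exists (fun j => if j == o then x.1 else if j == o1 then - x.1 else i j).
  split.
    split.
      move=> j Hj1 Hj2.
      rewrite (_ : (j == o) = false); last by rewrite -val_eqE /= (negbTE Hj1).
      by rewrite (_ : (j == o1) = false) //; rewrite -val_eqE /= (negbTE Hj2).
    rewrite -/o -/o1 eqxx; case: eqP => [/(congr1 val) /= /eqP|_]; first by rewrite gtn_eqF.
    by rewrite eqxx subrr.
  split.
    apply/eqP; rewrite -subr_eq0.
    have -> : one a' *m x.2 - x.2 = (one a' - 1) *m x.2 by rewrite mulmxBl mul1mx.
    apply/eqP; apply: HB; last by rewrite mulmxBl mul1mx ShA subrr.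
    apply/commr_sym/commrB; first by rewrite /GRing.comm (Y_one HM).
    exact: comm_sc.
  move=> j.
  have [->|Hj1] := eqVneq j o; first by exists m.
  have [->|Hj2] := eqVneq j o1.
    exists (m1 + m2 + m)%N.
    have -> : y' - (- x.1)%:M = z + - (y - x.1%:M).
      by rewrite /z raddfN /= opprK opprB [RHS]addrC [RHS]addrA subrK addrC.
    apply: (add_nil _ (erefl (m1 + m2 + m)%N)).
    + by apply/commrN/commr_sym/comm_subl.
    + apply: HB => //; exact/commr_sym/commrX/commr_sym.
    + by rewrite exprNn -mmA Hm mulmx0.
  have Hk1 : val j != k by apply: contra Hj1 => /eqP Hj; apply/eqP/val_inj.
  have Hk2 : val j != k.+1 by apply: contra Hj2 => /eqP Hj; apply/eqP/val_inj.
  have [mj Hmj] := Hvw j; exists mj.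
  apply: HB.
    apply: comm_powl; exact: (Y_comm HM).
  by rewrite comm_vec ?Hmj ?mulmx0 //; apply: HYj.
Qed.
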